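(* Let $R$ be an associative ring with identity and involution $*$, and let $a\in R^{\#}\cap R^{\dagger}$. Write $x=a(a^{\#})^*a^{\dagger}$ and $b=a^{\dagger}a^2$. Then the following are equivalent: (1) $a\in R^{SEP}$; (2) $x-b$ is a right $(-b)$-idempotent; (3) $x-b$ is a left $(-b)$-idempotent; (4) $b-x$ is a right $(-x)$-idempotent; (5) $b-x$ is a left $(-x)$-idempotent.
   Context: An involution on $R$ is a map $x\mapsto x^*$ with $(x^* )^*=x$, $(x+y)^*=x^*+y^*$, $(xy)^*=y^*x^*$. An element $a$ is Moore–Penrose invertible if there is $b$ with $aba=a$, $bab=b$, $(ab)^*=ab$, $(ba)^*=ba$; such $b$ is unique, denoted $a^{\dagger}$, and $R^{\dagger}$ is the set of such $a$. An element $a$ is group invertible if there is $b$ with $aba=a$, $bab=b$, $ab=ba$; such $b$ is unique, denoted $a^{\#}$, and $R^{\#}$ is the set of such $a$. For $a\in R^{\#}\cap R^{\dagger}$, $a$ is SEP if $a^*=a^{\dagger}=a^{\#}$; $R^{SEP}$ denotes the set of SEP elements. For $e,c\in R$, $e$ is a left $c$-idempotent if $e^2=ce$, and a right $c$-idempotent if $e^2=ec$. *)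

(* Defs.v *)
From mathcomp Require Import all_boot all_algebra.
Set Implicit Arguments. Unset Strict Implicit. Unset Printing Implicit Defensive.
Import GRing.Theory.
Local Open Scope ring_scope.

Definition involution (R : pzRingType) (star : R -> R) : Prop :=
  [/\ forall x, star (star x) = x,
      forall x y, star (x + y) = star x + star y &
      forall x y, star (x * y) = star y * star x].

Definition is_MP_inverse (R : pzRingType) (star : R -> R) (a b : R) : Prop :=
  [/\ a * b * a = a, b * a * b = b, star (a * b) = a * b & star (b * a) = b * a].

Definition is_group_inverse (R : pzRingType) (a b : R) : Prop :=
  [/\ a * b * a = a, b * a * b = b & a * b = b * a].

Definition MP_invertible (R : pzRingType) (star : R -> R) (a : R) : Prop :=
  exists b, is_MP_inverse star a b.

Definition group_invertible (R : pzRingType) (a : R) : Prop :=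
  exists b, is_group_inverse a b.

Definition SEP (R : pzRingType) (star : R -> R) (a : R) : Prop :=
  exists ad ag, [/\ is_MP_inverse star a ad, is_group_inverse a ag,
                    star a = ad & ad = ag].

Definition left_c_idempotent (R : pzRingType) (c e : R) : Prop := e * e = c * e.
Definition right_c_idempotent (R : pzRingType) (c e : R) : Prop := e * e = e * c.

(* Main.v *)
Require Import Defs.
From mathcomp Require Import all_boot all_algebra.
Import GRing.Theory.
Local Open Scope ring_scope.

Lemma pre2 {R : pzRingType} {u v w : R} : u * v = w -> forall X, X * u * v = X * w.
Proof. by move=> H X; rewrite -mulrA H. Qed.
Lemma pre3 {R : pzRingType} {u v w t : R} : u * v * w = t -> forall X, X * u * v * w = X * t.
Proof. by move=> H X; rewrite -H !mulrA. Qed.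

#[local] Set Default Proof Using "All".
Section S.
Variables (R : pzRingType) (s : R -> R) (a d g : R).
Hypotheses (Ss : forall x, s (s x) = x) (Sm : forall x y, s (x * y) = s y * s x).
Hypotheses (M1 : a * d * a = a) (M2 : d * a * d = d) (M3 : s (a * d) = a * d)
  (M4 : s (d * a) = d * a).
Hypotheses (G1 : a * g * a = a) (G2 : g * a * g = g) (G3 : a * g = g * a).

Lemma S3 x y z : s (x * y * z) = s z * s y * s x.
Proof. by rewrite !Sm mulrA. Qed.
Lemma Gga : g * g * a = g.
Proof. by rewrite -mulrA -G3 mulrA G2. Qed.
Lemma gaa : g * a * a = a.
Proof. by rewrite -G3 G1. Qed.
Lemma aag : a * a * g = a.
Proof. by rewrite -mulrA G3 mulrA G1. Qed.
Lemma agg : a * g * g = g.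
Proof. by rewrite G3 G2. Qed.
Lemma F1 : g * d * a = g.
Proof. by rewrite -[RHS]Gga -[in RHS]M1 !mulrA Gga. Qed.
Lemma F2 : a * d * g = g.
Proof. by rewrite -[RHS]agg -[in RHS]M1 (pre3 agg). Qed.
Lemma F3 : s a * s d * d = d.
Proof. by rewrite -Sm M4 M2. Qed.
Lemma F4 : s a * a * d = s a.
Proof. by rewrite -mulrA -M3 -Sm M1. Qed.
Lemma F5 : d * a * s a = s a.
Proof. by rewrite -M4 -Sm mulrA M1. Qed.
Lemma F6 : d * a * s g = s g.
Proof. by rewrite -[in RHS]F1 S3 -Sm M4. Qed.
Lemma F7 : s g * a * d = s g.
Proof. by rewrite -[in RHS]F2 S3 -[in RHS]mulrA -Sm M3 mulrA. Qed.
Lemma L0 : s a * s g * s a = s a.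
Proof. by rewrite -Sm -Sm mulrA G1. Qed.
Lemma K1 : s a * s g * d = d.
Proof. by rewrite -[in LHS]F3 !mulrA L0 F3. Qed.
Lemma K2 : s d * d * a = s d.
Proof. by rewrite -[in RHS]F3 S3 !Ss. Qed.
Lemma K3 : s a * s d = d * a.
Proof. by rewrite -Sm M4. Qed.
Lemma K4 : s d * s a = a * d.
Proof. by rewrite -Sm M3. Qed.
Lemma SG : s g * s a * s a = s a.
Proof. by rewrite -S3 aag. Qed.

Lemma U : a * g = d * a -> g = d.
Proof.
move=> H.
have H1 : s g * s a = a * g by rewrite -Sm H M4.
have H2 : a * d = a * g.
  rewrite -M3 Sm -{1}G1 S3 !mulrA K4 (pre2 H1) mulrA M1 //.
apply/esym; rewrite -M2 -mulrA H2 mulrA -H agg //.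
Qed.

Lemma U' : a * g = a * d -> g = d.
Proof.
move=> H; apply: U.
have H1 : s a * s g = g * a by rewrite -Sm -G3 H M3.
rewrite -M4 Sm -[in RHS]G1 S3 H1 (pre2 K3) mulrA (pre3 M1) G3 //.
Qed.

Lemma Fin : g = d -> a * s d * d = a -> s a = d.
Proof.
move=> gd Ha.
have AD : a * d = d * a by rewrite -gd G3.
have H1 : s d = d * a * s d by rewrite -{1}M2 S3 K4 AD.
have H2 : d * a = s d * d by rewrite -{1}Ha !mulrA -H1.
by rewrite -F4 -mulrA AD H2 mulrA K3 M2.
Qed.


Lemma ZXf : a * s a * s a * s d * d * a * s g * d = a * d.
Proof. by rewrite (pre3 K2) (pre2 K3) mulrA (pre3 F6) (pre3 K1). Qed.

Lemma MPuniq d' : a * d' * a = a -> d' * a * d' = d' -> s (a * d') = a * d' ->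
  s (d' * a) = d' * a -> d' = d.
Proof.
move=> N1 N2 N3 N4.
have N5 : s d' * s a = a * d' by rewrite -Sm N3.
have N6 : s a * s d' = d' * a by rewrite -Sm N4.
have E1 : d = d * a * d'.
  transitivity (d * s (a * d)); first by rewrite M3 mulrA M2.
  by rewrite Sm -{1}N1 S3 !mulrA (pre2 K4) (pre2 N5) !mulrA M2.
have E2 : d' = d * a * d'.
  transitivity (s (d' * a) * d'); first by rewrite N4 N2.
  by rewrite Sm -{1}M1 S3 K3 (pre2 N6) !mulrA (pre3 N2).
exact: etrans E2 (esym E1).
Qed.

Lemma Guniq g' : a * g' * a = a -> g' * a * g' = g' -> a * g' = g' * a -> g' = g.
Proof.
move=> Q1 Q2 Q3.
have aag' : a * a * g' = a by rewrite -mulrA Q3 mulrA Q1.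
have ag'g' : a * g' * g' = g' by rewrite Q3 Q2.
have E1 : g = g * a * g'.
  transitivity (g * g * (a * a * g')); first by rewrite aag' Gga.
  by rewrite !mulrA Gga.
have E2 : g' = g * a * g'.
  transitivity (g * a * a * g' * g'); first by rewrite gaa ag'g'.
  by rewrite (pre3 aag').
exact: etrans E2 (esym E1).
Qed.

Lemma mkSEP : g = d -> s a = d -> SEP s a.
Proof.
move=> gd sa; exists d, g; split => //.
Qed.

Lemma fw : SEP s a -> a * s g * d = a /\ d * (a * a) = a.
Proof.
case=> ad' [ag'] [[N1 N2 N3 N4] [Q1 Q2 Q3] e1 e2].
have dd : ad' = d := MPuniq _ N1 N2 N3 N4.
have gg : ag' = g := Guniq _ Q1 Q2 Q3.
have sa : s a = d by rewrite e1 dd.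
have gd : g = d by rewrite -gg -e2 dd.
split; first by rewrite gd -sa Ss sa -gd aag.
by rewrite mulrA -gd gaa.
Qed.

Lemma c5 : d * (a * a) * (d * (a * a)) = d * (a * a) * (a * s g * d) -> SEP s a.
Proof.
move=> E; rewrite !mulrA (pre3 M1) in E.
have A5 : a = a * s g * d.
  have E' := congr1 (fun t => g * g * a * t) E; rewrite /= in E'.
  rewrite !mulrA Gga F1 gaa in E'. exact: E'.
have aad : a * a * d = a by rewrite {1}A5 (pre3 M2) -A5.
have gd : g = d.
  apply: U'; move: (congr1 (fun t => g * t) aad); rewrite /= ?mulrA gaa => h.
  by rewrite G3 h.
apply: (mkSEP gd (Fin gd _)); by rewrite [RHS]A5 gd.
Qed.

Lemma c4 : d * (a * a) * (d * (a * a)) = a * s g * d * (d * (a * a)) -> SEP s a.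
Proof.
move=> E; rewrite !mulrA (pre3 M1) in E.
have E2 : d * a * a * a * g * g = a * s g * d * d * a * a * g * g by rewrite E.
rewrite !(pre3 aag) in E2.
have E3 : d * a * a = a * s g * d * d * a by rewrite E2 (pre3 G1).
have E4 : a * g = d * a.
  move: (congr1 (fun t => a * g * t * g) E3).
  by rewrite /= ?mulrA G1 -E3 !(pre3 aag) (pre3 F1).
have gd := U E4.
have AD : a * d = d * a by rewrite -gd G3.
have ddA : d * d * a = d by rewrite -gd Gga.
apply: (mkSEP gd (Fin gd _)).
rewrite gd (pre3 ddA) -AD M1 in E3; by rewrite -E3.
Qed.

Lemma c3 : (a * s g * d) * (a * s g * d) = (a * s g * d) * (d * (a * a)) -> SEP s a.
Proof.
move=> E.
have E' := congr1 (fun t => a * s a * s a * s d * d * t) E.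
rewrite /= ?mulrA ZXf M1 in E'.
have E5 : a * d * d * a * a * a * d = a * d * d * a * a by rewrite -E' (pre3 M2).
have E6 := congr1 (fun t => a * s a * s g * t) E5.
rewrite /= ?mulrA (pre3 F7) (pre3 K1) M1 in E6.
have aad : a * a * d = a by move: (congr1 (fun t => g * t) E6); rewrite /= ?mulrA gaa.
have gd : g = d.
  apply: U'; move: (congr1 (fun t => g * t) aad); rewrite /= ?mulrA gaa => h.
  by rewrite G3 h.
have ddA : d * d * a = d by rewrite -gd Gga.
apply: (mkSEP gd (Fin gd _)).
by rewrite gd (pre3 ddA) M1 in E'.
Qed.

Lemma c2 : (a * s g * d) * (a * s g * d) = d * (a * a) * (a * s g * d) -> SEP s a.
Proof.
move=> E.
have E' := congr1 (fun t => t * (a * s a * s a * s d * d)) E.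
rewrite /= ?mulrA !(pre3 F5) !(pre3 SG) !(pre3 F3) !(pre3 M2) in E'.
have E7 : a * d * (d * a * a * a * d) = d * a * a * a * d by rewrite -E' !mulrA M1.
have E8 := congr1 (fun t => t * a) E7.
rewrite /= ?mulrA !(pre3 M1) in E8.
have E9 := congr1 (fun t => t * g * g) E8.
rewrite /= ?mulrA !(pre3 aag) in E9.
have E10 : a * g = d * a.
  by move: (congr1 (fun t => a * g * t) E9); rewrite /= ?mulrA G1 (pre3 F1) E9 => ->.
have gd := U E10.
have AD : a * d = d * a by rewrite -gd G3.
have aad : a * a * d = a by rewrite -gd aag.
apply: (mkSEP gd (Fin gd _)).
by rewrite gd -AD M1 aad in E'.
Qed.

Lemma rci (x b : R) : (x - b) * (x - b) = (x - b) * (- b) -> x * x = b * x.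
Proof.
move=> H.
have h : (x - b) * x = (x - b) * (x - b) + (x - b) * b by rewrite -mulrDr subrK.
rewrite H mulrN addNr in h.
by apply/eqP; rewrite -subr_eq0 -mulrBl h.
Qed.

Lemma lci (x b : R) : (x - b) * (x - b) = (- b) * (x - b) -> x * x = x * b.
Proof.
move=> H.
have h : x * (x - b) = (x - b) * (x - b) + b * (x - b) by rewrite -mulrDl subrK.
rewrite H mulNr addNr in h.
by apply/eqP; rewrite -subr_eq0 -mulrBr h.
Qed.

Lemma main :
  let x := a * s g * d in
  let b := d * (a * a) in
  [/\ (SEP s a <-> right_c_idempotent (- b) (x - b)),
      (SEP s a <-> left_c_idempotent (- b) (x - b)),
      (SEP s a <-> right_c_idempotent (- x) (b - x)) &
      (SEP s a <-> left_c_idempotent (- x) (b - x))].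
Proof.
move=> x b; rewrite /x /b /right_c_idempotent /left_c_idempotent.
split; split.
- by case/fw=> -> ->; rewrite subrr ?mul0r ?mulr0.
- by move/rci; apply: c2.
- by case/fw=> -> ->; rewrite subrr ?mul0r ?mulr0.
- by move/lci; apply: c3.
- by case/fw=> -> ->; rewrite subrr ?mul0r ?mulr0.
- by move/rci; apply: c4.
- by case/fw=> -> ->; rewrite subrr ?mul0r ?mulr0.
- by move/lci; apply: c5.
Qed.

End S.

Theorem theorem3p4 (R : pzRingType) (star : R -> R) (a ad ag : R) :
  involution star ->
  is_MP_inverse star a ad -> is_group_inverse a ag ->
  let x := a * star ag * ad in
  let b := ad * (a * a) in
  [/\ (SEP star a <-> right_c_idempotent (- b) (x - b)),
      (SEP star a <-> left_c_idempotent (- b) (x - b)),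
      (SEP star a <-> right_c_idempotent (- x) (b - x)) &
      (SEP star a <-> left_c_idempotent (- x) (b - x))].
Proof.
move=> [Ss _ Sm] [M1 M2 M3 M4] [G1 G2 G3].
exact: (@main R star a ad ag Ss Sm M1 M2 M3 M4 G1 G2 G3).
Qed.
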